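(* Let $g_0\neq 0$ and let $s_0\in\mathbb{Z}_{\ge0}^{G^+}$ be given by $s_0(g_0)=1$ and $s_0(g)=0$ for $g\in G^+$, $g\neq g_0$. Then $s_0$ is a vertex of $P(G,g_0)$ and it is adjacent to every other vertex of $P(G,g_0)$.
   Context: Let $G$ be a finite abelian group of order $D$ with zero element $0$, and let $G^+=G\setminus\{0\}$. For $g_0\in G$, let $T(G,g_0)$ be the set of vectors $t=(t(g))_{g\in G^+}\in\mathbb{Z}_{\ge 0}^{G^+}$ with $\sum_{g\in G^+}t(g)g=g_0$ (sum computed in $G$). The master corner polyhedron is $P(G,g_0)=\mathrm{conv}\,T(G,g_0)\subset\mathbb{R}^{G^+}$. Two vertices are adjacent if the segment joining them is an edge (one-dimensional face) of $P(G,g_0)$. *)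

(* Defs.v *)
From HB Require Import structures.
From mathcomp Require Import all_boot all_order all_algebra.
Set Implicit Arguments. Unset Strict Implicit. Unset Printing Implicit Defensive.
Import Order.TTheory GRing.Theory Num.Theory.
Local Open Scope ring_scope.

Definition Gplus (G : finZmodType) : finType := {g : G | g != 0}.

Definition inT (G : finZmodType) (g0 : G) (t : Gplus G -> nat) : Prop :=
  \sum_(g : Gplus G) (val g) *+ t g = g0.

Definition embed (R : realFieldType) (G : finZmodType) (t : Gplus G -> nat)
  : Gplus G -> R := fun g => (t g)%:R.

Definition inP (R : realFieldType) (G : finZmodType) (g0 : G)
  (x : Gplus G -> R) : Prop :=
  exists (n : nat) (lam : 'I_n -> R) (t : 'I_n -> (Gplus G -> nat)),
    [/\ forall i, 0 <= lam i,
        \sum_(i < n) lam i = 1,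
        forall i, inT g0 (t i) &
        forall g, x g = \sum_(i < n) lam i * (t i g)%:R].

Definition dotp (R : realFieldType) (G : finZmodType)
  (c x : Gplus G -> R) : R := \sum_(g : Gplus G) c g * x g.

Definition is_face (R : realFieldType) (G : finZmodType)
  (P : (Gplus G -> R) -> Prop) (F : (Gplus G -> R) -> Prop) : Prop :=
  exists (c : Gplus G -> R) (d : R),
    (forall x, P x -> dotp c x <= d) /\
    (forall x, F x <-> (P x /\ dotp c x = d)).

Definition is_vertex (R : realFieldType) (G : finZmodType)
  (P : (Gplus G -> R) -> Prop) (v : Gplus G -> R) : Prop :=
  is_face P (fun x => x = v).

Definition segment (R : realFieldType) (G : finZmodType)
  (u v : Gplus G -> R) (x : Gplus G -> R) : Prop :=
  exists l : R, [/\ 0 <= l, l <= 1 & forall g, x g = (1 - l) * u g + l * v g].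

Definition adjacent (R : realFieldType) (G : finZmodType)
  (P : (Gplus G -> R) -> Prop) (u v : Gplus G -> R) : Prop :=
  [/\ is_vertex P u, is_vertex P v, u <> v & is_face P (segment u v)].

Definition s0 (G : finZmodType) (g0 : G) : Gplus G -> nat :=
  fun g => if val g == g0 then 1%N else 0%N.

(* Main.v *)
Require Import Defs.
From HB Require Import structures.
From mathcomp Require Import all_boot all_order all_algebra.
From mathcomp Require Import ring lra.
From Stdlib Require Import FunctionalExtensionality.
Set Implicit Arguments. Unset Strict Implicit. Unset Printing Implicit Defensive.
Import Order.TTheory GRing.Theory Num.Theory.
Local Open Scope ring_scope.

Lemma cardmul (G : finZmodType) (x : G) : x *+ #|G| = 0.
Proof.
have : \sum_(y : G) y = \sum_(y : G) (y + x) by apply: (reindex_inj (addIr x)).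
rewrite big_split /= sumr_const => /eqP. rewrite -[X in X == _]addr0 eq_sym => /eqP /addrI.
by [].
Qed.

Lemma dot_comb (R : realFieldType) (G : finZmodType) n (lam : 'I_n -> R)
  (t : 'I_n -> Gplus G -> nat) (x c : Gplus G -> R) :
  (forall g, x g = \sum_i lam i * (t i g)%:R) ->
  dotp c x = \sum_i lam i * dotp c (embed R (t i)).
Proof.
move=> Hx; rewrite /dotp.
under eq_bigr do rewrite Hx big_distrr.
rewrite exchange_big /=; apply: eq_bigr => i _.
rewrite big_distrr; apply: eq_bigr => g _ /=.
by rewrite /embed mulrCA.
Qed.

Lemma validP (R : realFieldType) (G : finZmodType) (g0 : G) (c : Gplus G -> R) d :
  (forall t, inT g0 t -> dotp c (embed R t) <= d) ->
  forall x, inP g0 x -> dotp c x <= d.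
Proof.
move=> Hv x [n [lam [t [Hl Hs Ht Hx]]]].
rewrite (dot_comb c Hx) -[leRHS]mul1r -Hs mulr_suml.
by apply: ler_sum => i _; apply: ler_wpM2l; [exact: Hl | exact: Hv].
Qed.

Lemma tight (R : realFieldType) (G : finZmodType) (g0 : G) (c : Gplus G -> R) d
  n (lam : 'I_n -> R) (t : 'I_n -> Gplus G -> nat) x :
  (forall t, inT g0 t -> dotp c (embed R t) <= d) ->
  (forall i, 0 <= lam i) -> \sum_i lam i = 1 -> (forall i, inT g0 (t i)) ->
  (forall g, x g = \sum_i lam i * (t i g)%:R) -> dotp c x = d ->
  forall i, lam i != 0 -> dotp c (embed R (t i)) = d.
Proof.
move=> Hv Hl Hs Ht Hx Hd.
have H0 : \sum_i lam i * (d - dotp c (embed R (t i))) = 0.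
  under eq_bigr do rewrite mulrBr.
  by rewrite sumrB -mulr_suml Hs mul1r -(dot_comb c Hx) Hd subrr.
move=> i Hi.
have Hp : forall j : 'I_n, true -> 0 <= lam j * (d - dotp c (embed R (t j))).
  by move=> j _; apply: mulr_ge0 (Hl j) _; rewrite subr_ge0 Hv.
have := @psumr_eq0P _ _ _ _ Hp H0 i isT.
by move/eqP; rewrite mulf_eq0 (negPf Hi) /= subr_eq0 => /eqP ->.
Qed.

Lemma segD (R : realFieldType) (G : finZmodType)
  n (lam : 'I_n -> R) (t : 'I_n -> Gplus G -> nat) (x u w : Gplus G -> R) :
  (forall i, 0 <= lam i) -> \sum_i lam i = 1 ->
  (forall g, x g = \sum_i lam i * (t i g)%:R) ->
  (forall i, lam i != 0 -> embed R (t i) = u \/ embed R (t i) = w) ->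
  segment u w x.
Proof.
move=> Hl Hs Hx Hd.
pose b i := [forall g, (t i g)%:R == w g].
pose l := \sum_(i | b i) lam i.
have Hc : \sum_(i | ~~ b i) lam i = 1 - l.
  have E : \sum_i lam i = l + \sum_(i | ~~ b i) lam i by rewrite (bigID b).
  by rewrite -Hs E addrAC subrr add0r.
exists l; split.
- by apply: sumr_ge0 => i _.
- rewrite -subr_ge0 -Hc; by apply: sumr_ge0 => i _.
move=> g; rewrite Hx (bigID b) /= addrC -Hc /l !mulr_suml; congr (_ + _).
  apply: eq_bigr => i Hb.
  have [->|Hi] := eqVneq (lam i) 0; first by rewrite !mul0r.
  case: (Hd i Hi) => [Hu|Hw]; first by rewrite -Hu.
  by move: Hb; rewrite /b -Hw => /negP; case; apply/forallP => h; rewrite /embed.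
apply: eq_bigr => i Hb.
by move/forallP: Hb => /(_ g) /eqP ->.
Qed.

Lemma inP_embed (R : realFieldType) (G : finZmodType) (g0 : G) t :
  inT g0 t -> inP (R:=R) g0 (embed R t).
Proof.
move=> Ht; exists 1%N, (fun _ => 1), (fun _ => t); split.
- by move=> _; exact: ler01.
- by rewrite big_ord1.
- by [].
- by move=> g; rewrite big_ord1 mul1r.
Qed.


Lemma seg_P (R : realFieldType) (G : finZmodType) (g0 : G) a b (x : Gplus G -> R) l :
  inT g0 a -> inT g0 b -> 0 <= l -> l <= 1 ->
  (forall g, x g = (1 - l) * embed R a g + l * embed R b g) ->
  inP g0 x /\ (forall c, dotp c x = (1 - l) * dotp c (embed R a) + l * dotp c (embed R b)).
Proof.
move=> Ha Hb Hl0 Hl1 Hx.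
pose lam (i : 'I_2) := if i == ord0 then 1 - l else l.
pose t (i : 'I_2) := if i == ord0 then a else b.
have Hx' : forall g, x g = \sum_i lam i * (t i g)%:R.
  by move=> g; rewrite Hx !big_ord_recl big_ord0 addr0.
split.
  exists 2%N, lam, t; split.
  - by move=> i; rewrite /lam; case: ifP => _ //; rewrite subr_ge0.
  - by rewrite !big_ord_recl big_ord0 addr0 /lam /= subrK.
  - by move=> i; rewrite /t; case: ifP.
  - exact: Hx'.
by move=> c; rewrite (dot_comb c Hx') !big_ord_recl big_ord0 addr0.
Qed.

Lemma s0E (G : finZmodType) (g0 : G) (g0' : Gplus G) :
  val g0' = g0 -> forall g, s0 g0 g = if g == g0' then 1%N else 0%N.
Proof. by move=> H g; rewrite /s0 -H val_eqE. Qed.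

Lemma s0_inT (G : finZmodType) (g0 : G) (g0' : Gplus G) :
  val g0' = g0 -> inT g0 (s0 g0).
Proof.
move=> H; rewrite /inT (bigD1 g0') //= (s0E H) eqxx H big1 ?addr0 // => g Hg.
by rewrite (s0E H) (negPf Hg).
Qed.

Lemma dot_s0 (R : realFieldType) (G : finZmodType) (g0 : G) (g0' : Gplus G) (c : Gplus G -> R) :
  val g0' = g0 -> dotp c (embed R (s0 g0)) = c g0'.
Proof.
move=> H; rewrite /dotp (bigD1 g0') //= /embed (s0E H) eqxx mulr1 big1 ?addr0 // => g Hg.
by rewrite (s0E H) (negPf Hg) mulr0.
Qed.

Lemma key (R : realFieldType) (G : finZmodType) (g0 : G) (g0' : Gplus G)
  (c : Gplus G -> R) d :
  val g0' = g0 -> c g0' = d -> d < 0 -> (forall g, g != g0' -> c g < 0) ->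
  (forall x, inT g0 x -> x g0' = 0%N -> dotp c (embed R x) <= d) ->
  forall x, inT g0 x -> dotp c (embed R x) <= d /\
    (dotp c (embed R x) = d -> x g0' = 0%N \/ embed R x = embed R (s0 g0)).
Proof.
move=> H Hc Hd Hneg H0 x Hx.
case Ek: (x g0') => [|k]; first by split; [apply: H0 | left].
have E : dotp c (embed R x) = d * k.+1%:R + \sum_(g | g != g0') c g * (x g)%:R.
  by rewrite /dotp (bigD1 g0') //= /embed Ek Hc.
have Hr : \sum_(g | g != g0') c g * (x g)%:R <= 0.
  apply: sumr_le0 => g Hg; apply: mulr_le0_ge0; last exact: ler0n.
  by apply: ltW; apply: Hneg.
have Hk : d * k%:R <= 0 by apply: mulr_le0_ge0; [apply: ltW | apply: ler0n].
rewrite E -addn1 natrD mulrDr mulr1.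
split; first lra.
move=> Heq; right.
have Hk0 : d * k%:R = 0 by lra.
have Hr0 : \sum_(g | g != g0') - (c g * (x g)%:R) = 0 by rewrite sumrN; lra.
move/eqP: Hk0; rewrite mulf_eq0 (lt_eqF Hd) /= pnatr_eq0 => /eqP Hk0.
apply: functional_extensionality => g.
rewrite /embed (s0E H).
have [->|Hg] := eqVneq g g0'; first by rewrite Ek Hk0.
have Hp : forall h, h != g0' -> 0 <= - (c h * (x h)%:R).
  move=> h Hh; rewrite oppr_ge0; apply: mulr_le0_ge0; last exact: ler0n.
  by apply: ltW; apply: Hneg.
have := @psumr_eq0P _ _ _ _ Hp Hr0 g Hg.
move/eqP; rewrite oppr_eq0 mulf_eq0 (lt_eqF (Hneg g Hg)) /= => /eqP ->.
by [].
Qed.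

Lemma s0_vertex (R : realFieldType) (G : finZmodType) (g0 : G) (g0' : Gplus G) :
  val g0' = g0 -> is_vertex (inP (R:=R) g0) (embed R (s0 g0)).
Proof.
move=> H.
pose c (g : Gplus G) : R := if g == g0' then -1 else -2.
have Hstrict : forall x, inT g0 x -> x g0' = 0%N -> dotp c (embed R x) < -1.
  move=> x Hx Hx0.
  have E : dotp c (embed R x) = -2 * \sum_g (x g)%:R.
    rewrite mulr_sumr /dotp; apply: eq_bigr => g _; rewrite /c /embed.
    by case: eqP => [->|_]; rewrite ?Hx0 ?mulr0.
  case: (boolP [exists g, (0 < x g)%N]) => [/existsP [g Hg]|/existsPn Hn].
    have E2 : \sum_h (x h)%:R = (x g)%:R + \sum_(h | h != g) (x h)%:R :> R.
      by rewrite (bigD1 g).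
    have H1 : 1 <= (x g)%:R :> R by rewrite ler1n.
    have H2 : 0 <= \sum_(h | h != g) (x h)%:R :> R by apply: sumr_ge0 => h _; apply: ler0n.
    rewrite E E2; lra.
  have : g0 = 0.
    rewrite -Hx /inT big1 // => g _.
    by move: (Hn g); rewrite lt0n negbK => /eqP ->.
  by move/eqP; rewrite -H (negPf (valP g0')).
have Hk := @key R G g0 g0' c (-1) H.
have Hk' : forall x, inT g0 x -> (dotp c (embed R x) <= -1) /\
    (dotp c (embed R x) = -1 -> x g0' = 0%N \/ embed R x = embed R (s0 g0)).
  apply: Hk.
  - by rewrite /c eqxx.
  - lra.
  - by move=> g Hg; rewrite /c (negPf Hg); lra.
  - by move=> x Hx Hx0; apply: ltW; apply: Hstrict.
clear Hk; rename Hk' into Hk.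
exists c, (-1); split.
  by apply: validP => t Ht; case: (Hk t Ht).
move=> x; split.
  move=> ->; split; first by apply: inP_embed; apply: (s0_inT H).
  by rewrite (dot_s0 _ H) /c eqxx.
move=> [[n [lam [t [Hl Hs Ht Hx]]]] Hdot].
have Hv : forall t, inT g0 t -> dotp c (embed R t) <= -1 by move=> t' Ht'; case: (Hk t' Ht').
have Hti := tight Hv Hl Hs Ht Hx Hdot.
have [l [_ _ Hseg]] : segment (embed R (s0 g0)) (embed R (s0 g0)) x.
  apply: (segD Hl Hs Hx) => i Hi; left.
  have Hd := Hti i Hi.
  case: (Hk _ (Ht i)) => _ /(_ Hd) [Hz|//].
  by have := Hstrict _ (Ht i) Hz; rewrite Hd ltxx.
by apply: functional_extensionality => g; rewrite Hseg -mulrDl subrK mul1r.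
Qed.

Lemma nonzero_T (G : finZmodType) (g0 : G) (x : Gplus G -> nat) :
  g0 != 0 -> inT g0 x -> exists g, (0 < x g)%N.
Proof.
move=> Hg0 Hx.
case: (boolP [exists g, (0 < x g)%N]) => [/existsP //|/existsPn Hn].
have : g0 = 0.
  rewrite -Hx /inT big1 // => g _.
  by move: (Hn g); rewrite lt0n negbK => /eqP ->.
by move/eqP; rewrite (negPf Hg0).
Qed.

Lemma adj_face (R : realFieldType) (G : finZmodType) (g0 : G) (g0' : Gplus G)
  (v : Gplus G -> R) :
  val g0' = g0 -> is_vertex (inP g0) v -> v <> embed R (s0 g0) ->
  is_face (inP g0) (segment (embed R (s0 g0)) v).
Proof.
move=> H [c [d [Hval Hface]]] Hne.
have Hg0 : g0 != 0 by rewrite -H (valP g0').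
have [Pv cv] : inP g0 v /\ dotp c v = d by apply/Hface.
have Hv' : forall t, inT g0 t -> dotp c (embed R t) <= d.
  by move=> t Ht; apply: Hval; apply: inP_embed.
have HF : forall t, inT g0 t -> dotp c (embed R t) = d -> embed R t = v.
  by move=> t Ht Hd; apply/Hface; split => //; apply: inP_embed.
have [t Ht Htv] : exists2 t, inT g0 t & embed R t = v.
  case: Pv => n [lam [ts [Hl Hs Ht Hx]]].
  have Hti := tight Hv' Hl Hs Ht Hx cv.
  have [i Hi] : exists i, lam i != 0.
    case: (boolP [exists i, lam i != 0]) => [/existsP //|/existsPn Hn].
    have Z : \sum_i lam i = 0.
      by apply: big1 => i _; move: (Hn i); rewrite negbK => /eqP.
    by move: Hs; rewrite Z => /eqP; rewrite eq_sym oner_eq0.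
  by exists (ts i) => //; apply: HF => //; apply: Hti.
have dt : dotp c (embed R t) = d by rewrite Htv.
have Ncard : (0 < #|G|)%N by apply/card_gt0P; exists 0.
have Hneg : forall g, c g < 0.
  move=> g.
  pose t' h := (t h + (if h == g then #|G| else 0))%N.
  have Ht' : inT g0 t'.
    rewrite /inT /t'; under eq_bigr do rewrite mulrnDr.
    rewrite big_split /= Ht (bigD1 g) //= eqxx cardmul add0r big1 ?addr0 // => h Hh.
    by rewrite (negPf Hh).
  have E : dotp c (embed R t') = d + c g * #|G|%:R.
    rewrite -dt /dotp /embed /t'; under eq_bigr do rewrite natrD mulrDr.
    rewrite big_split /=; congr (_ + _).
    rewrite (bigD1 g) //= eqxx big1 ?addr0 // => h Hh.
    by rewrite (negPf Hh) mulr0.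
  have Hle := Hv' _ Ht'.
  have Hne0 : dotp c (embed R t') != d.
    apply/negP => /eqP Hd.
    have := HF _ Ht' Hd; rewrite -Htv => /(congr1 (fun f => f g)).
    rewrite /embed /t' eqxx natrD => /eqP; rewrite -subr_eq0 addrAC subrr add0r.
    by rewrite pnatr_eq0 -(negbK (_ == _)) -lt0n Ncard.
  have Hlt : c g * #|G|%:R < 0.
    by rewrite lt_neqAle; apply/andP; split; [apply: contra Hne0; rewrite E => /eqP ->; rewrite addr0 | lra].
  by move: Hlt; rewrite pmulr_llt0 // ltr0n.
have Hd : d < 0.
  have [g Hg] := nonzero_T Hg0 Ht.
  rewrite -dt /dotp (bigD1 g) //=.
  have H1 : c g * embed R t g < 0 by rewrite nmulr_rlt0 // /embed ltr0n.
  have H2 : \sum_(h | h != g) c h * embed R t h <= 0.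
    apply: sumr_le0 => h _; apply: mulr_le0_ge0; [exact: ltW | exact: ler0n].
  lra.
have Ht0 : t g0' = 0%N.
  case Ek: (t g0') => [|k] //.
  pose b h := ((t h).*2 - s0 g0 h)%N.
  have Hb : forall h, (b h + s0 g0 h = (t h).*2)%N.
    move=> h; rewrite /b subnK // (s0E H); case: eqP => [->|//]; by rewrite Ek.
  have Hbt : inT g0 b.
    apply: (@addIr _ g0); rewrite -[X in _ + X = _](s0_inT H) /inT -big_split /=.
    under eq_bigr do rewrite -mulrnDr Hb -mul2n mulnC mulrnA.
    by rewrite sumrMnl Ht mulr2n.
  have E : dotp c (embed R b) + dotp c (embed R (s0 g0)) = d + d.
    rewrite -dt /dotp -big_split /= -big_split /=; apply: eq_bigr => h _.
    by rewrite /embed -!mulrDr -natrD Hb -addnn natrD.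
  have H1 := Hv' _ Hbt.
  have H2 := Hv' _ (s0_inT H).
  have : dotp c (embed R (s0 g0)) = d by lra.
  by move/(HF _ (s0_inT H)) => /esym.
pose c' g := if g == g0' then d else c g.
have Hcc : forall x, x g0' = 0%N -> dotp c' (embed R x) = dotp c (embed R x).
  move=> x Hx; apply: eq_bigr => g _; rewrite /c'.
  by case: eqP => [->|//]; rewrite /embed Hx !mulr0.
have Hk : forall x, inT g0 x -> (dotp c' (embed R x) <= d) /\
    (dotp c' (embed R x) = d -> x g0' = 0%N \/ embed R x = embed R (s0 g0)).
  apply: (key H).
  - by rewrite /c' eqxx.
  - exact: Hd.
  - by move=> g Hg; rewrite /c' (negPf Hg).
  - by move=> x Hx Hx0; rewrite Hcc //; apply: Hv'.
exists c', d; split.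
  by apply: validP => x Hx; case: (Hk x Hx).
move=> x; split.
  move=> [l [Hl0 Hl1 Hx]]; rewrite -Htv in Hx.
  have [Px Dx] := seg_P (s0_inT H) Ht Hl0 Hl1 Hx.
  split => //; rewrite Dx (dot_s0 _ H) Hcc // dt /c' eqxx; lra.
move=> [[n [lam [ts [Hl Hs Hts Hx]]]] Hdot].
have Hv2 : forall t, inT g0 t -> dotp c' (embed R t) <= d by move=> t' Ht'; case: (Hk t' Ht').
have Hti := tight Hv2 Hl Hs Hts Hx Hdot.
apply: (segD Hl Hs Hx) => i Hi.
case: (Hk _ (Hts i)) => _ /(_ (Hti i Hi)) [Hz|->]; last by left.
right; apply: HF => //; rewrite -Hcc //; exact: Hti.
Qed.

Theorem corollary4 (R : realFieldType) (G : finZmodType) (g0 : G) :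
  g0 != 0%R ->
  is_vertex (inP (R:=R) g0) (embed R (s0 g0)) /\
  (forall v : Gplus G -> R,
     is_vertex (inP g0) v -> v <> embed R (s0 g0) ->
     adjacent (inP g0) (embed R (s0 g0)) v).
Proof.
move=> Hg0.
pose g0' : Gplus G := exist _ g0 Hg0.
have H : val g0' = g0 by [].
have Hs := s0_vertex R H.
split => // v Hv Hne.
split => //; first by move=> E; apply: Hne.
exact: adj_face H Hv Hne.
Qed.
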